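(* Let $A=\mathrm{Sym}(\mathrm{Sym}^2(\mathbb{C}^\infty))=\mathbb{C}[x_{i,j}]$ and let $\mathfrak{m}$ be the ideal generated by $x_{i,i}-1$ ($i\ge1$) and $x_{i,j}$ ($i\ne j$). If $I$ is a nonzero $\mathrm{GL}_\infty$-stable ideal of $A$, then $I+\mathfrak{m}=A$.
   Context: $x_{i,j}=e_ie_j$ for the basis $e_1,e_2,\dots$ of $\mathbb{C}^\infty$; $\mathrm{GL}_\infty=\bigcup_n\mathrm{GL}_n$ acts on $A$ via its action on $\mathbb{C}^\infty$. *)

(* Defs.v *)
From HB Require Import structures.
From mathcomp Require Import all_boot all_order all_algebra.
Set Implicit Arguments. Unset Strict Implicit. Unset Printing Implicit Defensive.
Import Order.TTheory GRing.Theory Num.Theory.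
Local Open Scope ring_scope.

(* Model of A = Sym(Sym^2(K^oo)) = K[x_{i,j}] (x_{i,j} = x_{j,i}) as the ring of
   polynomial functions on points v : nat -> nat -> K, where the variable
   x_{i,j} is the coordinate function v |-> v (min i j) (max i j).
   Since K is infinite, polynomials in finitely many of the x_{i,j} are
   faithfully represented by their polynomial functions. *)
Definition pt (K : Type) := nat -> nat -> K.
Definition fn (K : Type) := pt K -> K.

Definition xvar (K : Type) (i j : nat) : fn K :=
  fun v => v (minn i j) (maxn i j).

Inductive is_poly (K : numClosedFieldType) : fn K -> Prop :=
| poly_const (c : K) : is_poly (fun _ => c)
| poly_var (i j : nat) : is_poly (xvar i j)
| poly_add (f g : fn K) : is_poly f -> is_poly g -> is_poly (fun v => f v + g v)
| poly_mul (f g : fn K) : is_poly f -> is_poly g -> is_poly (fun v => f v * g v).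

Definition is_ideal (K : numClosedFieldType) (I : fn K -> Prop) : Prop :=
  [/\ (forall f, I f -> is_poly f),
      I (fun _ => 0),
      (forall f g, I f -> I g -> I (fun v => f v + g v)) &
      (forall a f, is_poly a -> I f -> I (fun v => a v * f v))].

Inductive gen_ideal (K : numClosedFieldType) (G : fn K -> Prop) : fn K -> Prop :=
| gen_ideal0 : gen_ideal G (fun _ => 0)
| gen_ideal_gen (a g : fn K) : is_poly a -> G g -> gen_ideal G (fun v => a v * g v)
| gen_ideal_add (f g : fn K) :
    gen_ideal G f -> gen_ideal G g -> gen_ideal G (fun v => f v + g v).

Inductive m_gen (K : numClosedFieldType) : fn K -> Prop :=
| m_gen_diag (i : nat) : m_gen (fun v => xvar i i v - 1)
| m_gen_off (i j : nat) : i <> j -> m_gen (xvar i j).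

Definition m_ideal (K : numClosedFieldType) : fn K -> Prop := gen_ideal (@m_gen K).

(* g in GL_n viewed as an element of GL_oo (identity on e_k, k >= n):
   entry (k, i) is the e_k-coordinate of g e_i. *)
Definition ext (K : numClosedFieldType) (n : nat) (M : 'M[K]_n) (k i : nat) : K :=
  match (insub k : option 'I_n), (insub i : option 'I_n) with
  | Some k', Some i' => M k' i'
  | _, _ => (k == i)%:R
  end.

(* g . x_{i,j} = (g e_i)(g e_j) = sum_{k,l} g_{k,i} g_{l,j} x_{k,l};
   the bound n + i + j + 1 covers all k with g_{k,i} <> 0. *)
Definition act_pt (K : numClosedFieldType) (n : nat) (M : 'M[K]_n) (v : pt K) : pt K :=
  fun i j => \sum_(k < n + i + j + 1) \sum_(l < n + i + j + 1)
               ext M k i * ext M l j * xvar k l v.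

Definition act (K : numClosedFieldType) (n : nat) (M : 'M[K]_n) (f : fn K) : fn K :=
  fun v => f (act_pt M v).

Definition GL_stable (K : numClosedFieldType) (I : fn K -> Prop) : Prop :=
  forall (n : nat) (M : 'M[K]_n), M \in unitmx -> forall f, I f -> I (act M f).

(* Main.v *)
Require Import Defs.
From HB Require Import structures.
From mathcomp Require Import all_boot all_order all_algebra.
From mathcomp Require Import ring zify.
From Stdlib Require Import FunctionalExtensionality Classical.
Import GRing.Theory Num.Theory.
Local Open Scope ring_scope.

Section Aux.
Variable K : numClosedFieldType.

Lemma gen_mul (G : fn K -> Prop) (b h : fn K) :
  is_poly b -> gen_ideal G h -> gen_ideal G (fun v => b v * h v).
Proof.
move=> pb; elim=> [|a g pa Gg|f g _ IHf _ IHg].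
- have -> : (fun v : pt K => b v * 0) = (fun _ => 0) by apply: functional_extensionality => v; rewrite mulr0.
  exact: gen_ideal0.
- have -> : (fun v => b v * (a v * g v)) = (fun v => (fun w => b w * a w) v * g v)
    by apply: functional_extensionality => v; rewrite mulrA.
  by apply: gen_ideal_gen => //; apply: poly_mul.
- have -> : (fun v => b v * (f v + g v)) = (fun v => (fun w => b w * f w) v + (fun w => b w * g w) v)
    by apply: functional_extensionality => v; rewrite mulrDr.
  exact: gen_ideal_add.
Qed.

Definition p0 : pt K := fun i j => (i == j)%:R.

Lemma xvar_p0 i j : xvar i j p0 = (i == j)%:R.
Proof.
rewrite /xvar /p0; case: (leqP i j) => h //.
by rewrite eq_sym.
Qed.

Lemma poly_m (h : fn K) : is_poly h -> m_ideal (fun v => h v - h p0).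
Proof.
rewrite /m_ideal; elim=> [c|i j|f g pf IHf pg IHg|f g pf IHf pg IHg].
- have -> : (fun _ : pt K => c - c) = (fun _ => 0) by apply: functional_extensionality => v; rewrite subrr.
  exact: gen_ideal0.
- rewrite xvar_p0; case: (eqVneq i j) => [<-|nij]; rewrite ?eqxx.
    have -> : (fun v : pt K => xvar i i v - true%:R) = (fun v => (fun _ => 1) v * (fun w => xvar i i w - 1) v)
      by apply: functional_extensionality => v; rewrite mul1r.
    by apply: gen_ideal_gen; [apply: poly_const| apply: m_gen_diag].
  have -> : (fun v : pt K => xvar i j v - false%:R) = (fun v => (fun _ => 1) v * xvar i j v)
    by apply: functional_extensionality => v; rewrite mul1r subr0.
  by apply: gen_ideal_gen; [apply: poly_const| apply: m_gen_off; apply/eqP].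
- have -> : (fun v => f v + g v - (f p0 + g p0)) = (fun v => (fun w => f w - f p0) v + (fun w => g w - g p0) v)
    by apply: functional_extensionality => v; ring.
  exact: gen_ideal_add.
- have -> : (fun v => f v * g v - f p0 * g p0) =
     (fun v => (fun w => g w * (f w - f p0)) v + (fun w => (fun _ => f p0) w * (g w - g p0)) v)
    by apply: functional_extensionality => v; ring.
  apply: gen_ideal_add; apply: gen_mul => //; exact: poly_const.
Qed.

Lemma poly_dep (f : fn K) : is_poly f -> exists N, forall v v' : pt K,
  (forall i j, (i <= j)%N -> (j < N)%N -> v i j = v' i j) -> f v = f v'.
Proof.
elim=> [c|i j|f1 g1 _ [N1 H1] _ [N2 H2]|f1 g1 _ [N1 H1] _ [N2 H2]].
- by exists 0%N.
- exists (maxn i j).+1 => v v' H; rewrite /xvar; apply: H; first by rewrite geq_min leq_max leqnn.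
  by rewrite ltnS.
- exists (maxn N1 N2) => v v' H; rewrite (H1 v v') ?(H2 v v') // => a b ab bN; apply: H => //;
  by apply: (leq_trans bN); rewrite leq_max leqnn ?orbT.
- exists (maxn N1 N2) => v v' H; rewrite (H1 v v') ?(H2 v v') // => a b ab bN; apply: H => //;
  by apply: (leq_trans bN); rewrite leq_max leqnn ?orbT.
Qed.

Lemma poly_curve (f : fn K) : is_poly f -> forall w : K -> pt K,
  (forall i j, exists q : {poly K}, forall t, w t i j = q.[t]) ->
  exists q : {poly K}, forall t, f (w t) = q.[t].
Proof.
move=> pf w Hw; elim: pf => [c|i j|f1 g1 _ [q1 H1] _ [q2 H2]|f1 g1 _ [q1 H1] _ [q2 H2]].
- by exists c%:P => t; rewrite hornerC.
- have [q Hq] := Hw (minn i j) (maxn i j); by exists q.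
- by exists (q1 + q2) => t; rewrite hornerD H1 H2.
- by exists (q1 * q2) => t; rewrite hornerM H1 H2.
Qed.

Lemma nonroot (q : {poly K}) (s : seq K) : q != 0 ->
  exists t, t \notin s /\ q.[t] != 0.
Proof.
move=> q0; set Q := q * \prod_(x <- s) ('X - x%:P).
have Q0 : Q != 0 by rewrite mulf_neq0 // monic_neq0 // monic_prod_XsubC.
have : ~~ all (root Q) [seq (i%:R : K) | i <- iota 0 (size Q)].
  apply/negP => hall; have := max_poly_roots Q0 hall.
  rewrite size_map size_iota ltnn => H; suff: false by []; apply: H.
  rewrite map_inj_uniq ?iota_uniq // => a b /eqP; rewrite eqr_nat => /eqP.
  done.
case/allPn => t _ nr; exists t.
move: nr; rewrite /root /Q hornerM mulf_eq0 negb_or => /andP [qt pt].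
split => //; rewrite -root_prod_XsubC; exact: pt.
Qed.
End Aux.

Section Mx.
Variable K : numClosedFieldType.

Lemma ext_mx n (F : nat -> nat -> K) :
  (forall a i, (n <= a)%N || (n <= i)%N -> F a i = (a == i)%:R) ->
  forall a i, ext (\matrix_(x < n, y < n) F x y) a i = F a i.
Proof.
move=> HF a i; rewrite /ext; case: (@insubP _ _ 'I_n a) => [a' ha ea|ha]; case: (@insubP _ _ 'I_n i) => [i' hi ei|hi] /=.
- by rewrite mxE ea ei.
- by rewrite HF //; apply/orP; right; rewrite leqNgt.
- by rewrite HF //; apply/orP; left; rewrite leqNgt.
- by rewrite HF //; apply/orP; left; rewrite leqNgt.
Qed.

Lemma sum_delta B i (F : nat -> K) : (i < B)%N ->
  \sum_(a < B) ((a : nat) == i)%:R * F a = F i.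
Proof.
move=> iB; rewrite (bigD1 (Ordinal iB)) //= eqxx mul1r big1 ?addr0 // => a Ha.
have -> : ((a : nat) == i) = false; last by rewrite mul0r.
apply/negbTE; apply: contra Ha => /eqP h; apply/eqP; exact: val_inj.
Qed.

Lemma sum_lin B i k x y (F : nat -> K) : (i < B)%N -> (k < B)%N ->
  \sum_(m < B) (((m : nat) == i)%:R * x + ((m : nat) == k)%:R * y) * F m = x * F i + y * F k.
Proof.
move=> iB kB.
rewrite (eq_bigr (fun m : 'I_B => ((m : nat) == i)%:R * (x * F m) + ((m : nat) == k)%:R * (y * F m))); last first.
  by move=> m _; ring.
by rewrite big_split /= (@sum_delta B i (fun m => x * F m)) // (@sum_delta B k (fun m => y * F m)).
Qed.

Lemma act_gen n (M : 'M[K]_n) (r c : nat -> K) k (u : pt K) i j : (k <= n)%N ->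
  (forall a b, ext M a b = (a == b)%:R * r b + (a == k)%:R * c b) ->
  act_pt M u i j = r i * r j * xvar i j u + r i * c j * xvar i k u
                   + c i * r j * xvar k j u + c i * c j * xvar k k u.
Proof.
move=> kn He; rewrite /act_pt.
have iB : (i < n + i + j + 1)%N by lia.
have jB : (j < n + i + j + 1)%N by lia.
have kB : (k < n + i + j + 1)%N by lia.
have inner : forall a : 'I_(n + i + j + 1), \sum_(b < n + i + j + 1) ext M a i * ext M b j * xvar a b u
   = ext M a i * (r j * xvar a j u + c j * xvar a k u).
  move=> a; rewrite (eq_bigr (fun b : 'I_(n + i + j + 1) => (((b:nat) == j)%:R * r j + ((b : nat) == k)%:R * c j) * (ext M a i * xvar a b u))); last first.
    by move=> b _; rewrite (He b); ring.
  rewrite (@sum_lin _ j k (r j) (c j) (fun b => ext M a i * xvar a b u)) //; ring.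
under eq_bigr => a _ do rewrite inner He.
rewrite (@sum_lin _ i k (r i) (c i) (fun a => r j * xvar a j u + c j * xvar a k u)) //; ring.
Qed.

Lemma unit_mx n (F G : nat -> nat -> K) :
  (forall a b : 'I_n, \sum_(m < n) F a m * G m b = ((a : nat) == b)%:R) ->
  (\matrix_(a < n, b < n) F a b) \in unitmx.
Proof.
move=> H; apply: (proj1 (@mulmx1_unit _ _ _ (\matrix_(a < n, b < n) G a b) _)).
apply/matrixP => a b; rewrite !mxE.
under eq_bigr => m _ do rewrite !mxE.
by rewrite H.
Qed.

End Mx.

Section Good.
Variable K : numClosedFieldType.
Variable I : fn K -> Prop.
Hypothesis Iid : is_ideal I.
Hypothesis IGL : GL_stable I.

Definition Good (w : pt K) := forall f, I f -> f w != 0 -> exists g, I g /\ g (p0 K) != 0.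

Lemma good_p0 : Good (p0 K).
Proof. by move=> f If fp; exists f. Qed.

Lemma good_act n (M : 'M[K]_n) u : M \in unitmx -> Good u -> Good (act_pt M u).
Proof. by move=> Mu Gu f If fw; apply: (Gu (act M f)) => //; apply: IGL. Qed.

Lemma good_curve (w : K -> pt K) (s : seq K) :
  (forall i j, exists q : {poly K}, forall t, w t i j = q.[t]) ->
  (forall t, t \notin s -> Good (w t)) -> Good (w 0).
Proof.
move=> Hw Hg f If fw.
have pf : is_poly f by case: Iid => H _ _ _; exact: H.
have [q Hq] := @poly_curve K f pf w Hw.
have q0 : q != 0 by apply: contraNneq fw => q0; rewrite Hq q0 horner0.
have [t [ts qt]] := @nonroot K q s q0.
by apply: (Hg t ts f If); rewrite Hq.
Qed.

Definition sympt N (S : nat -> nat -> K) : pt K :=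
  fun i j => if (i < N)%N && (j < N)%N then S i j else (i == j)%:R.

Lemma curve_sympt N S (E : nat -> nat -> K) (s : seq K) :
  (forall t, t \notin s -> Good (sympt N (fun i j => S i j + E i j * t))) -> Good (sympt N S).
Proof.
move=> Hg.
have -> : sympt N S = (fun t => sympt N (fun i j => S i j + E i j * t)) 0.
  by apply: functional_extensionality => i; apply: functional_extensionality => j;
     rewrite /sympt /=; case: ifP => // _; rewrite mulr0 addr0.
apply: (@good_curve (fun t => sympt N (fun i j => S i j + E i j * t)) s) Hg => i j /=.
unfold sympt.
case: ((i < N)%N && (j < N)%N).
  by exists ((S i j)%:P + E i j *: 'X) => t; rewrite hornerD hornerC hornerZ hornerX.
by exists ((i == j)%:R)%:P => t; rewrite hornerC.
Qed.

Definition symm (S : nat -> nat -> K) := forall i j, S i j = S j i.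

Lemma xvar_sym N S a b : symm S -> xvar a b (sympt N S) = sympt N S a b.
Proof.
move=> sS; rewrite /xvar; case: (leqP a b) => h.
  by [].
rewrite /sympt andbC sS eq_sym //.
Qed.


Lemma sympt_sym N S : symm S -> symm (sympt N S).
Proof. by move=> sS i j; rewrite /sympt andbC sS eq_sym. Qed.

Lemma good_diag N S : symm S ->
  (forall i j, (i < N)%N -> (j < N)%N -> i != j -> S i j = 0) -> Good (sympt N S).
Proof.
move=> sS dS.
apply: (@curve_sympt N S (fun i j => (i == j)%:R) [seq - S a a | a <- iota 0 N]) => t ts.
pose r a := if (a < N)%N then sqrtC (S a a + t) else 1.
have rnz : forall a, (a < N)%N -> r a != 0.
  move=> a aN; rewrite /r aN sqrtC_eq0; apply: contra ts => /eqP h; apply/mapP; exists a.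
    by rewrite mem_iota add0n aN.
  by apply/eqP; rewrite -addr_eq0 addrC h.
pose D := \matrix_(x < N, y < N) (((x : nat) == y)%:R * r y : K).
have He : forall a b, ext D a b = (a == b)%:R * r b + (a == 0%N)%:R * 0.
  move=> a b; rewrite mulr0 addr0 (@ext_mx K N (fun x y => (x == y)%:R * r y)) // => x y hxy.
  case: eqVneq hxy => [<-|_] hxy; last by rewrite mul0r.
  rewrite /r ifF ?mulr1 //; move: hxy; lia.
have -> : sympt N (fun i j => S i j + (i == j)%:R * t) = act_pt D (p0 K).
  apply: functional_extensionality => i; apply: functional_extensionality => j.
  rewrite (@act_gen K N D r (fun _ => 0) 0%N (p0 K) i j) // !mulr0 !mul0r !addr0 xvar_p0 /sympt.
  case: eqVneq => [<-|nij].
    rewrite andbb mulr1 -expr2 /r; case: (ltnP i N) => iN /=.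
      by rewrite sqrtCK mul1r.
    by rewrite expr1n.
  rewrite mulr0; case: ifP => [/andP [iN jN]|_] //.
  by rewrite dS // mul0r addr0.
apply: good_act; last exact: good_p0.
apply: (@unit_mx K N (fun x y => (x == y)%:R * r y) (fun x y => (x == y)%:R * (r y)^-1)).
move=> a b.
rewrite (eq_bigr (fun m : 'I_N => (((m:nat) == b)%:R * (r b)^-1 + ((m:nat) == b)%:R * 0) * (((a : nat) == m)%:R * r m))); last by move=> m _; ring.
rewrite (@sum_lin K N b b (r b)^-1 0 (fun m => ((a:nat) == m)%:R * r m)) ?ltn_ord //.
rewrite mul0r addr0; case: ((a : nat) == (b : nat)).
  by rewrite mulr1n mul1r mulVf // rnz.
by rewrite mulr0n mul0r mulr0.
Qed.

Definition rowsdiag k (S : nat -> nat -> K) := forall i j, (i < k)%N -> i != j -> S i j = 0.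

Lemma good_pivot N k S : (k < N)%N ->
  (forall W, symm W -> rowsdiag k.+1 W -> Good (sympt N W)) ->
  symm S -> rowsdiag k S -> S k k != 0 -> Good (sympt N S).
Proof.
move=> kN IH sS dS Skk.
pose c b := if (k < b)%N && (b < N)%N then S k b / S k k else 0.
pose W i j := if (i == k) || (j == k) then (if i == j then S k k else 0)
              else S i j - c i * c j * S k k.
have ck : c k = 0 by rewrite /c ltnn.
have cN : forall b, (N <= b)%N -> c b = 0 by move=> b hb; rewrite /c ifF //; lia.
have sW : symm W.
  move=> i j; rewrite /W orbC; case: ifP => _; first by rewrite eq_sym.
  by rewrite sS (mulrC (c j)).
have dW : rowsdiag k.+1 W.
  move=> i j ik ij; rewrite /W (negbTE ij); case: ifP => // /norP [/eqP nik /eqP njk].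
  rewrite /c (ifF (b := (k < i)%N && _)); last by lia.
  rewrite dS //; [ring | lia].
pose M := \matrix_(x < N, y < N) (((x : nat) == y)%:R * 1 + ((x:nat) == k)%:R * c y : K).
have He : forall a b, ext M a b = (a == b)%:R * 1 + (a == k)%:R * c b.
  apply: (@ext_mx K N (fun x y => (x == y)%:R * 1 + (x == k)%:R * c y)) => a b; case/orP => h.
    have -> : (a == k) = false by apply/negbTE/eqP; lia.
    by rewrite mul0r addr0 mulr1.
  by rewrite cN // mulr0 addr0 mulr1.
have SkJ : forall j, j != k -> sympt N S k j = c j * S k k.
  move=> j jk; rewrite /sympt /c kN /=; case: (ltnP j N) => jN /=; rewrite ?andbT ?andbF.
    case: (ltnP k j) => kj /=; first by rewrite divfK.
    by rewrite sS dS ?mul0r //; lia.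
  by rewrite mul0r eq_sym (negbTE jk).
have Wk : forall a, sympt N W a k = (a == k)%:R * S k k.
  move=> a; rewrite /sympt kN andbT /W eqxx orbT; case: (ltnP a N) => aN /=.
    by case: eqVneq => _; rewrite ?mul1r ?mul0r.
  have -> : (a == k) = false by apply/negbTE/eqP; lia.
  by rewrite mul0r.
have -> : sympt N S = act_pt M (sympt N W).
  apply: functional_extensionality => i; apply: functional_extensionality => j.
  rewrite (@act_gen K N M (fun _ => 1) c k (sympt N W) i j (ltnW kN) He) !(@xvar_sym N W _ _ sW) !mul1r.
  rewrite [sympt N W k j](sympt_sym N W sW) !Wk ?eqxx.
  case: (eqVneq i k) => [->|ik]; case: (eqVneq j k) => [->|jk].
  - by rewrite Wk ck /sympt kN /= eqxx /=; ring.
  - by rewrite [sympt N W k j](sympt_sym N W sW) Wk (negbTE jk) ck SkJ //=; ring.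
  - by rewrite Wk (negbTE ik) ck (sympt_sym N S sS) SkJ //=; ring.
  - rewrite /= /sympt /W (negbTE ik) (negbTE jk) /=.
    case: ifP => [/andP [iN jN]|hN]; first by ring.
    have -> : c i * c j = 0.
      case/nandP: hN; rewrite -leqNgt => h; [by rewrite cN // mul0r | by rewrite (cN j) // mulr0].
    ring.
apply: good_act; last by apply: IH.
apply: (@unit_mx K N (fun x y => (x == y)%:R * 1 + (x == k)%:R * c y)
                      (fun x y => (x == y)%:R * 1 + (x == k)%:R * (- c y))).
move=> a b.
rewrite (eq_bigr (fun m : 'I_N => (((m:nat) == b)%:R * 1 + ((m:nat) == k)%:R * (- c b)) * (((a:nat) == m)%:R * 1 + ((a:nat) == k)%:R * c m))); last by move=> m _; ring.
rewrite (@sum_lin K N b k 1 (- c b) (fun m => ((a:nat) == m)%:R * 1 + ((a:nat) == k)%:R * c m)) ?ltn_ord // ck.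
ring.
Qed.

Lemma good_sym N S : symm S -> Good (sympt N S).
Proof.
have P : forall m, (m <= N)%N -> forall S, symm S -> rowsdiag (N - m) S -> Good (sympt N S).
  elim=> [|m IHm] hm S0 sS dS.
    rewrite subn0 in dS; apply: good_diag => // i j iN _ ij; exact: dS.
  set k := (N - m.+1)%N.
  have kN : (k < N)%N by rewrite /k; lia.
  have IH : forall W, symm W -> rowsdiag k.+1 W -> Good (sympt N W).
    move=> W sW dW; apply: (IHm (ltnW hm)) => //.
    by have -> : (N - m)%N = k.+1 by rewrite /k; lia.
  apply: (@curve_sympt N S0 (fun i j => ((i == k) && (j == k))%:R) [:: - S0 k k]) => t ts.
  apply: (@good_pivot N k _ kN IH).
  - by move=> i j; rewrite sS andbC.
  - move=> i j ik ij; rewrite dS //.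
    have -> : (i == k) = false by apply/negbTE/eqP; lia.
    by rewrite mul0r addr0.
  - rewrite eqxx mul1r; apply: contra ts => /eqP h.
    by rewrite inE -addr_eq0 addrC h.
move=> sS; apply: (P N (leqnn N)) => //.
by rewrite subnn.
Qed.

End Good.

Theorem mainTheorem14 (K : numClosedFieldType) (I : fn K -> Prop) :
  is_ideal I -> GL_stable I -> (exists f, I f /\ f <> (fun _ => 0)) ->
  forall a : fn K, is_poly a ->
    exists f h : fn K, [/\ I f, m_ideal h & a = (fun v => f v + h v)].
Proof.
move=> Iid IGL [f0 [If0 f0nz]] a pa.
have Ipoly : forall f, I f -> is_poly f by case: Iid.
have [v fv] : exists v, f0 v != 0.
  apply: NNPP => H; apply: f0nz; apply: functional_extensionality => v.
  case: (eqVneq (f0 v) 0) => // hv; exfalso; apply: H; by exists v.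
have [N HN] := @poly_dep K f0 (Ipoly _ If0).
pose S i j := v (minn i j) (maxn i j).
have sS : symm K S by move=> i j; rewrite /S minnC maxnC.
have fS : f0 (sympt K N S) != 0.
  rewrite (HN _ v) // => i j ij jN.
  rewrite /sympt /S ifT; last by apply/andP; split => //; apply: (leq_ltn_trans ij).
  by rewrite (minn_idPl ij) (maxn_idPr ij).
have [g [Ig gp]] := @good_sym K I Iid IGL N S sS f0 If0 fS.
pose C := a (p0 K) / g (p0 K).
pose f := fun w => (fun _ : pt K => C) w * g w.
have If : I f by case: Iid => _ _ _ H; apply: H => //; exact: poly_const.
pose h := fun w => a w - f w.
exists f, h; split => //.
  have ph : is_poly h.
    have -> : h = (fun w => a w + (fun _ => -1) w * f w).
      by apply: functional_extensionality => w; rewrite /h mulN1r.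
    by apply: poly_add => //; apply: poly_mul; [exact: poly_const | exact: Ipoly].
  have -> : h = (fun w => h w - h (p0 K)).
    apply: functional_extensionality => w.
    by rewrite /h /f /C divfK // subrr subr0.
  exact: (@poly_m K h ph).
by apply: functional_extensionality => w; rewrite /h addrC subrK.
Qed.
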